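(* Let $IS\in\{\Box,\blacksquare\}^2$ and let $\tau$ be a correct compositional translation from $\mathrm{SYNCSIMPLE}$ into $\mathrm{LOCKSIMPLE}_{2,IS}$ of blocking type $(P_1,P_2)$. Then both $\tau(!)$ and $\tau(?)$ have a nonempty suffix in $\{T_1,T_2\}^+$.
   Context: $\mathrm{SYNCSIMPLE}$: subprocesses $\mathcal{U} ::= \checkmark \mid 0 \mid\, !\mathcal{U} \mid\, ?\mathcal{U}$; processes are finite parallel compositions ($\mid$ associative, commutative, $0$ a unit). Reduction: $!\mathcal{U}_1\mid ?\mathcal{U}_2\mid \mathcal{P}\to \mathcal{U}_1\mid\mathcal{U}_2\mid\mathcal{P}$. Successful: of form $\checkmark\mid\mathcal{P}$; may-convergent: reduces to a successful process; must-convergent: every reachable process is may-convergent. $\mathrm{LOCKSIMPLE}_{k,IS}$ ($IS\in\{\Box,\blacksquare\}^k$, $\Box$ empty, $\blacksquare$ full): subprocesses are words over $\{P_1,T_1,\dots,P_k,T_k\}$ followed by $0$ or $\checkmark$; states $(\mathcal{P},C)$ reduce by $(P_i\mathcal{U}\mid\mathcal{P},C)\to(\mathcal{U}\mid\mathcal{P},C[C_i:=\blacksquare])$ only if $C_i=\Box$, and $(T_i\mathcal{U}\mid\mathcal{P},C)\to(\mathcal{U}\mid\mathcal{P},C[C_i:=\Box])$ always. Success = process contains $\checkmark$; a process $\mathcal{P}$ is may/must-convergent iff the state $(\mathcal{P},IS)$ is. A compositional translation $\tau$ is given by words $\tau(!),\tau(?)$ with $\tau(0)=0$, $\tau(\checkmark)=\checkmark$,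 $\tau(!\mathcal{U})=\tau(!)\tau(\mathcal{U})$, $\tau(?\mathcal{U})=\tau(?)\tau(\mathcal{U})$, $\tau$ commuting with $\mid$; correct = preserves and reflects may- and must-convergence. Blocking type of a word $S$: execute $S$ alone from $IS$; if it gets stuck at an occurrence of $P_i$ that is the first symbol from $\{P_i,T_i\}$ in $S$ the type is $P_i$, if stuck at a later occurrence of $P_i$ the type is $P_iP_i$; $\tau$ has blocking type $(W_1,W_2)$ if $\tau(!)$ has type $W_1$ and $\tau(?)$ type $W_2$. $X^+$ denotes nonempty finite words over $X$. *)

(* Defs.v *)
From Stdlib Require Import List Permutation.
Import ListNotations.

Inductive ssub : Type :=
| STick : ssub
| SZero : ssub
| SSnd : ssub -> ssub
| SRcv : ssub -> ssub.

(* processes: finite parallel compositions, as lists up to permutation *)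
Definition sproc := list ssub.

Definition sstep (P P' : sproc) : Prop :=
  exists U1 U2 R, Permutation P (SSnd U1 :: SRcv U2 :: R) /\ P' = U1 :: U2 :: R.

Inductive ssteps : sproc -> sproc -> Prop :=
| ssteps_refl P : ssteps P P
| ssteps_step P P' P'' : sstep P P' -> ssteps P' P'' -> ssteps P P''.

Definition ssuccess (P : sproc) : Prop := In STick P.
Definition smay (P : sproc) : Prop := exists P', ssteps P P' /\ ssuccess P'.
Definition smust (P : sproc) : Prop := forall P', ssteps P P' -> smay P'.

Inductive lockid : Type := L1 | L2.
Definition lockid_eq_dec (i j : lockid) : {i = j} + {i <> j}.
Proof. decide equality. Defined.

Inductive cell : Type := Empty | Full.   (* Box / blacksquare *)
Definition cells := lockid -> cell.
Definition upd (C : cells) (i : lockid) (c : cell) : cells :=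
  fun j => if lockid_eq_dec i j then c else C j.

Inductive lsym : Type := P (i : lockid) | T (i : lockid).

Inductive lsub : Type :=
| LTick : lsub
| LZero : lsub
| LP : lockid -> lsub -> lsub
| LT : lockid -> lsub -> lsub.

Definition lproc := list lsub.

Definition lstep (S S' : lproc * cells) : Prop :=
  let (Pr, C) := S in
  (exists i U R, Permutation Pr (LP i U :: R) /\ C i = Empty /\
                 S' = (U :: R, upd C i Full)) \/
  (exists i U R, Permutation Pr (LT i U :: R) /\
                 S' = (U :: R, upd C i Empty)).

Inductive lsteps : lproc * cells -> lproc * cells -> Prop :=
| lsteps_refl S : lsteps S S
| lsteps_step S S' S'' : lstep S S' -> lsteps S' S'' -> lsteps S S''.

Definition lsuccess (S : lproc * cells) : Prop := In LTick (fst S).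
Definition lmay (S : lproc * cells) : Prop := exists S', lsteps S S' /\ lsuccess S'.
Definition lmust (S : lproc * cells) : Prop := forall S', lsteps S S' -> lmay S'.

Definition lmay_proc (IS : cells) (Pr : lproc) : Prop := lmay (Pr, IS).
Definition lmust_proc (IS : cells) (Pr : lproc) : Prop := lmust (Pr, IS).

Definition prefix_sym (s : lsym) (u : lsub) : lsub :=
  match s with P i => LP i u | T i => LT i u end.
Definition prefix (w : list lsym) (u : lsub) : lsub := fold_right prefix_sym u w.

(* translation determined by the words tau(!) = ws and tau(?) = wr *)
Fixpoint tr_sub (ws wr : list lsym) (U : ssub) : lsub :=
  match U with
  | STick => LTick
  | SZero => LZero
  | SSnd U' => prefix ws (tr_sub ws wr U')
  | SRcv U' => prefix wr (tr_sub ws wr U')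
  end.
Definition tr_proc (ws wr : list lsym) (Pr : sproc) : lproc := map (tr_sub ws wr) Pr.

Definition correct_translation (IS : cells) (ws wr : list lsym) : Prop :=
  forall Pr : sproc,
    (smay Pr <-> lmay_proc IS (tr_proc ws wr Pr)) /\
    (smust Pr <-> lmust_proc IS (tr_proc ws wr Pr)).

(* executing a word alone, sequentially; None = gets stuck *)
Fixpoint exec (w : list lsym) (C : cells) : option cells :=
  match w with
  | [] => Some C
  | P i :: w' => match C i with Empty => exec w' (upd C i Full) | Full => None end
  | T i :: w' => exec w' (upd C i Empty)
  end.

Definition mentions (i : lockid) (s : lsym) : Prop :=
  match s with P j => j = i | T j => j = i end.

Definition blocking_type_P (IS : cells) (w : list lsym) (i : lockid) : Prop :=
  exists w1 w2 C, w = w1 ++ P i :: w2 /\ exec w1 IS = Some C /\ C i = Full /\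
                  Forall (fun s => ~ mentions i s) w1.

Definition is_T (s : lsym) : Prop := match s with T _ => True | P _ => False end.

Definition has_T_suffix (w : list lsym) : Prop :=
  exists w1 w2, w = w1 ++ w2 /\ w2 <> [] /\ Forall is_T w2.

(* Main.v *)
Require Import Defs.
From Stdlib Require Import List Permutation FunctionalExtensionality Lia.
Import ListNotations.

Definition wst : Type := (list lsym * list lsym * cells)%type.

Inductive wstep : wst -> wst -> Prop :=
| wA_P i a b C : C i = Empty -> wstep (P i :: a, b, C) (a, b, upd C i Full)
| wA_T i a b C : wstep (T i :: a, b, C) (a, b, upd C i Empty)
| wB_P i a b C : C i = Empty -> wstep (a, P i :: b, C) (a, b, upd C i Full)
| wB_T i a b C : wstep (a, T i :: b, C) (a, b, upd C i Empty).

Inductive wsteps : wst -> wst -> Prop :=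
| ws_refl s : wsteps s s
| ws_step s1 s2 s3 : wstep s1 s2 -> wsteps s2 s3 -> wsteps s1 s3.

Lemma wsteps_trans s1 s2 s3 : wsteps s1 s2 -> wsteps s2 s3 -> wsteps s1 s3.
Proof. induction 1; intros; auto. econstructor; eauto. Qed.

Lemma wsteps_one s1 s2 : wstep s1 s2 -> wsteps s1 s2.
Proof. intros; econstructor; eauto; constructor. Qed.

Lemma wsteps_appB a b C a' b' C' e :
  wsteps (a,b,C) (a',b',C') -> wsteps (a, b ++ e, C) (a', b' ++ e, C').
Proof.
  intros H. remember (a,b,C) as s1. remember (a',b',C') as s2.
  revert a b C Heqs1. induction H; intros; subst.
  - inversion Heqs1; subst; constructor.
  - inversion H; subst; (econstructor; [ simpl; constructor; auto | eapply IHwsteps; eauto ]).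
Qed.

Lemma wsteps_appA a b C a' b' C' e :
  wsteps (a,b,C) (a',b',C') -> wsteps (a ++ e, b, C) (a' ++ e, b', C').
Proof.
  intros H. remember (a,b,C) as s1. remember (a',b',C') as s2.
  revert a b C Heqs1. induction H; intros; subst.
  - inversion Heqs1; subst; constructor.
  - inversion H; subst; (econstructor; [ simpl; constructor; auto | eapply IHwsteps; eauto ]).
Qed.

Lemma last_A : forall s s', wsteps s s' -> forall x y C b' C' u j,
  s = (x,y,C) -> s' = ([], b', C') -> x = u ++ [P j] ->
  exists b0 C0, wsteps (x,y,C) ([P j], b0, C0) /\ C0 j = Empty.
Proof.
  intros s s' H. induction H as [s|s1 s2 s3 Hst Hrest IH];
    intros x y C b' C' u j E1 E2 Ex; subst.
  - inversion E2; subst. destruct u; discriminate.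
  - inversion Hst; subst;
    try (destruct (IH _ _ _ _ _ u j eq_refl eq_refl eq_refl) as (b0&C0&Hw&Hc);
         exists b0, C0; split; auto; econstructor; eauto; fail).
    + destruct u as [|z u]; simpl in *;
      match goal with Hx : _ :: _ = _ |- _ => inversion Hx; subst end.
      * exists y, C. split; [constructor|auto].
      * destruct (IH _ _ _ _ _ u j eq_refl eq_refl eq_refl) as (b0&C0&Hw&Hc).
        exists b0, C0. split; auto. econstructor; eauto.
    + destruct u as [|z u]; simpl in *;
      match goal with Hx : _ :: _ = _ |- _ => inversion Hx; subst end.
      destruct (IH _ _ _ _ _ u j eq_refl eq_refl eq_refl) as (b0&C0&Hw&Hc).
      exists b0, C0. split; auto. econstructor; eauto.
Qed.

Fixpoint solo (w : list lsym) (C : cells) : list lsym * cells :=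
  match w with
  | [] => ([], C)
  | P i :: w' => match C i with Empty => solo w' (upd C i Full) | Full => (w, C) end
  | T i :: w' => solo w' (upd C i Empty)
  end.

Lemma soloB_steps a w C : wsteps (a, w, C) (a, fst (solo w C), snd (solo w C)).
Proof.
  revert C. induction w as [|s w IH]; intros C; simpl.
  - constructor.
  - destruct s as [i|i].
    + destruct (C i) eqn:E.
      * econstructor; [constructor; auto| apply IH].
      * constructor.
    + econstructor; [constructor| apply IH].
Qed.

Lemma solo_end w C : fst (solo w C) = [] \/
  exists k r, fst (solo w C) = P k :: r /\ snd (solo w C) k = Full.
Proof.
  revert C. induction w as [|s w IH]; intros C; simpl; auto.
  destruct s as [i|i]; auto.
  destruct (C i) eqn:E; auto. right. exists i, w. simpl. auto.
Qed.

Lemma exec_steps f C C' g b : exec f C = Some C' -> wsteps (f ++ g, b, C) (g, b, C').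
Proof.
  revert C. induction f as [|s f IH]; intros C H; simpl in *.
  - inversion H; subst; constructor.
  - destruct s as [i|i].
    + destruct (C i) eqn:E; [|discriminate].
      econstructor; [constructor; auto | apply IH; auto].
    + econstructor; [constructor | apply IH; auto].
Qed.

Lemma upd_same C i c : upd C i c i = c.
Proof. unfold upd. destruct (lockid_eq_dec i i); congruence. Qed.
Lemma upd_other C i c k : i <> k -> upd C i c k = C k.
Proof. unfold upd. destruct (lockid_eq_dec i k); congruence. Qed.

Lemma exec_preserve i w C C' : Forall (fun s => ~ mentions i s) w -> exec w C = Some C' -> C' i = C i.
Proof.
  revert C. induction w as [|s w IH]; intros C Hf H; simpl in *.
  - congruence.
  - inversion Hf; subst. destruct s as [j|j]; simpl in H2.
    + destruct (C j); [|discriminate]. rewrite (IH _ H3 H). apply upd_other; auto.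
    + rewrite (IH _ H3 H). apply upd_other; auto.
Qed.

Lemma lock_two (j k i : lockid) : k <> j -> i = j \/ i = k.
Proof. destruct j, k, i; intuition congruence. Qed.


Inductive tstep : lsub -> cells -> lsub -> cells -> Prop :=
| tP i u C : C i = Empty -> tstep (LP i u) C u (upd C i Full)
| tT i u C : tstep (LT i u) C u (upd C i Empty).

Lemma perm_cons2 {A} (z : A) R x y : Permutation (z :: R) [x; y] ->
  (z = x /\ R = [y]) \/ (z = y /\ R = [x]).
Proof.
  intros H. pose proof (Permutation_length H) as HL. simpl in HL.
  destruct R as [|r [|r' R]]; simpl in HL; try lia.
  apply Permutation_length_2_inv in H. destruct H as [H|H]; inversion H; subst; auto.
Qed.

Lemma lstep_inv Pr C S' x y : lstep (Pr, C) S' -> Permutation Pr [x; y] ->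
  exists x' y' Pr' C', S' = (Pr', C') /\ Permutation Pr' [x'; y'] /\
   ((tstep x C x' C' /\ y' = y) \/ (tstep y C y' C' /\ x' = x)).
Proof.
  intros H Hp. simpl in H.
  destruct H as [(i&U&R&Hq&Hc&->)|(i&U&R&Hq&->)].
  - assert (Hz := Permutation_trans (Permutation_sym Hq) Hp).
    apply perm_cons2 in Hz. destruct Hz as [(<-&->)|(<-&->)].
    + exists U, y, [U; y], (upd C i Full). repeat split; auto. left; split; auto; constructor; auto.
    + exists x, U, [U; x], (upd C i Full). repeat split; auto. apply perm_swap.
      right; split; auto; constructor; auto.
  - assert (Hz := Permutation_trans (Permutation_sym Hq) Hp).
    apply perm_cons2 in Hz. destruct Hz as [(<-&->)|(<-&->)].
    + exists U, y, [U; y], (upd C i Empty). repeat split; auto. left; split; auto; constructor; auto.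
    + exists x, U, [U; x], (upd C i Empty). repeat split; auto. apply perm_swap.
      right; split; auto; constructor; auto.
Qed.

Lemma lstep_of1 Pr C x y x' C' : tstep x C x' C' -> Permutation Pr [x; y] ->
  lstep (Pr, C) ([x'; y], C').
Proof.
  intros H Hp. simpl. destruct H.
  - left. exists i, u, [y]. auto.
  - right. exists i, u, [y]. auto.
Qed.

Lemma lstep_of2 Pr C x y y' C' : tstep y C y' C' -> Permutation Pr [x; y] ->
  lstep (Pr, C) ([y'; x], C').
Proof.
  intros H Hp. assert (Hp' : Permutation Pr [y; x]) by (eapply Permutation_trans; [exact Hp| apply perm_swap]).
  simpl. destruct H.
  - left. exists i, u, [x]. auto.
  - right. exists i, u, [x]. auto.
Qed.

Lemma prefix_nil k : prefix [] k = k. Proof. reflexivity. Qed.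
Lemma prefix_cons s w k : prefix (s :: w) k = prefix_sym s (prefix w k). Proof. reflexivity. Qed.
Lemma prefix_app a b k : prefix (a ++ b) k = prefix a (prefix b k).
Proof. unfold prefix. apply fold_right_app. Qed.

Lemma wstep_tstep a b C a' b' C' ka kb : wstep (a,b,C) (a',b',C') ->
  (tstep (prefix a ka) C (prefix a' ka) C' /\ b' = b) \/
  (tstep (prefix b kb) C (prefix b' kb) C' /\ a' = a).
Proof.
  intros H. inversion H; subst; rewrite ?prefix_cons; simpl.
  - left; split; auto; constructor; auto.
  - left; split; auto; constructor; auto.
  - right; split; auto; constructor; auto.
  - right; split; auto; constructor; auto.
Qed.

Lemma wsteps_lsteps ka kb : forall s1 s2, wsteps s1 s2 ->
  forall a b C a' b' C' Pr, s1 = (a,b,C) -> s2 = (a',b',C') ->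
  Permutation Pr [prefix a ka; prefix b kb] ->
  exists Pr', lsteps (Pr, C) (Pr', C') /\ Permutation Pr' [prefix a' ka; prefix b' kb].
Proof.
  intros s1 s2 H. induction H as [s|s1 s2 s3 Hst Hrest IH];
    intros a b C a' b' C' Pr E1 E2 Hp; subst.
  - inversion E2; subst. exists Pr. split; auto. constructor.
  - destruct s2 as ((a2,b2),C2).
    destruct (wstep_tstep _ _ _ _ _ _ ka kb Hst) as [(Ht&->)|(Ht&->)].
    + pose proof (lstep_of1 _ _ _ _ _ _ Ht Hp) as Hl.
      destruct (IH a2 b C2 a' b' C' [prefix a2 ka; prefix b kb] eq_refl eq_refl (Permutation_refl _))
        as (Pr'&Hl'&Hp').
      exists Pr'. split; auto. econstructor; eauto.
    + pose proof (lstep_of2 _ _ _ _ _ _ Ht Hp) as Hl.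
      destruct (IH a b2 C2 a' b' C' [prefix b2 kb; prefix a ka] eq_refl eq_refl (perm_swap _ _ _))
        as (Pr'&Hl'&Hp').
      exists Pr'. split; auto. econstructor; eauto.
Qed.


Definition inert (k : lsub) := forall C x C', ~ tstep k C x C'.
Lemma inert_tick : inert LTick. Proof. intros C x C' H; inversion H. Qed.
Lemma inert_zero : inert LZero. Proof. intros C x C' H; inversion H. Qed.

Lemma tstep_prefix_inv a k C x C' : inert k -> tstep (prefix a k) C x C' ->
  exists a', x = prefix a' k /\ (forall b, wstep (a,b,C) (a',b,C')) /\
             (forall b, wstep (b,a,C) (b,a',C')).
Proof.
  intros Hk H. destruct a as [|s a'].
  - rewrite prefix_nil in H. exfalso; eapply Hk; eauto.
  - rewrite prefix_cons in H. destruct s as [i|i]; simpl in H; inversion H; subst.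
    + exists a'. repeat split; intros; constructor; auto.
    + exists a'. repeat split; intros; constructor; auto.
Qed.

Lemma lsteps_wsteps ka kb : inert ka -> inert kb -> forall S1 S2, lsteps S1 S2 ->
  forall Pr C a b, S1 = (Pr, C) -> Permutation Pr [prefix a ka; prefix b kb] ->
  exists a' b' Pr' C', S2 = (Pr', C') /\ Permutation Pr' [prefix a' ka; prefix b' kb] /\
     wsteps (a,b,C) (a',b',C').
Proof.
  intros Hka Hkb S1 S2 H. induction H as [S|S S1 S2 Hst Hrest IH];
    intros Pr C a b E Hp; subst.
  - exists a, b, Pr, C. repeat split; auto. constructor.
  - destruct (lstep_inv _ _ _ _ _ Hst Hp) as (x'&y'&Pr1&C1&->&Hp1&[(Ht&->)|(Ht&->)]).
    + destruct (tstep_prefix_inv _ _ _ _ _ Hka Ht) as (a1&->&Hw&_).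
      destruct (IH Pr1 C1 a1 b eq_refl Hp1) as (a'&b'&Pr'&C'&->&Hp'&Hw').
      exists a', b', Pr', C'. repeat split; auto. econstructor; eauto.
    + destruct (tstep_prefix_inv _ _ _ _ _ Hkb Ht) as (b1&->&_&Hw).
      destruct (IH Pr1 C1 a b1 eq_refl Hp1) as (a'&b'&Pr'&C'&->&Hp'&Hw').
      exists a', b', Pr', C'. repeat split; auto. econstructor; eauto.
Qed.

Definition blocked (a : list lsym) (k : lsub) (C : cells) : Prop :=
  (a = [] /\ k = LZero) \/ (exists i r, a = P i :: r /\ C i = Full).

Lemma blocked_no_tstep a k C x C' : blocked a k C -> ~ tstep (prefix a k) C x C'.
Proof.
  intros [(->&->)|(i&r&->&Hi)] H.
  - inversion H.
  - rewrite prefix_cons in H. simpl in H. inversion H; subst. congruence.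
Qed.

Lemma blocked_not_tick a k C : blocked a k C -> prefix a k <> LTick.
Proof.
  intros [(->&->)|(i&r&->&Hi)]; rewrite ?prefix_cons; simpl; discriminate.
Qed.

Lemma stuck_not_may a b ka kb C Pr : blocked a ka C -> blocked b kb C ->
  Permutation Pr [prefix a ka; prefix b kb] -> ~ lmay (Pr, C).
Proof.
  intros Ha Hb Hp (S'&Hs&Hsucc). inversion Hs; subst.
  - unfold lsuccess in Hsucc; simpl in Hsucc.
    apply (Permutation_in _ Hp) in Hsucc. simpl in Hsucc.
    destruct Hsucc as [H|[H|[]]].
    + exact (blocked_not_tick _ _ _ Ha H).
    + exact (blocked_not_tick _ _ _ Hb H).
  - destruct (lstep_inv _ _ _ _ _ H Hp) as (x'&y'&Pr1&C1&_&_&[(Ht&_)|(Ht&_)]).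
    + exact (blocked_no_tstep _ _ _ _ _ Ha Ht).
    + exact (blocked_no_tstep _ _ _ _ _ Hb Ht).
Qed.

Definition NoStuck (IS : cells) a b ka kb := forall a' b' C',
  wsteps (a,b,IS) (a',b',C') -> blocked a' ka C' -> blocked b' kb C' -> False.
Definition NoSucc (IS : cells) a b ka kb := forall a' b' C',
  wsteps (a,b,IS) (a',b',C') -> (a' = [] /\ ka = LTick) \/ (b' = [] /\ kb = LTick) -> False.

Lemma nostuck_of IS Pr0 a b ka kb : lmust (Pr0, IS) ->
  Permutation Pr0 [prefix a ka; prefix b kb] -> NoStuck IS a b ka kb.
Proof.
  intros Hm Hp a' b' C' Hw Ha Hb.
  destruct (wsteps_lsteps ka kb _ _ Hw a b IS a' b' C' Pr0 eq_refl eq_refl Hp) as (Pr'&Hl&Hp').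
  apply (stuck_not_may _ _ _ _ _ _ Ha Hb Hp'). apply Hm. exact Hl.
Qed.

Lemma nosucc_of IS Pr0 a b ka kb : ~ lmay (Pr0, IS) ->
  Permutation Pr0 [prefix a ka; prefix b kb] -> NoSucc IS a b ka kb.
Proof.
  intros Hn Hp a' b' C' Hw Hs. apply Hn.
  destruct (wsteps_lsteps ka kb _ _ Hw a b IS a' b' C' Pr0 eq_refl eq_refl Hp) as (Pr'&Hl&Hp').
  exists (Pr', C'). split; auto. unfold lsuccess; simpl.
  apply (Permutation_in _ (Permutation_sym Hp')).
  destruct Hs as [(->&->)|(->&->)]; simpl; auto.
Qed.

Lemma may_extract IS Pr0 a b : lmay (Pr0, IS) ->
  Permutation Pr0 [prefix a LTick; prefix b LZero] ->
  exists b' C', wsteps (a,b,IS) ([],b',C').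
Proof.
  intros (S'&Hl&Hs) Hp.
  destruct (lsteps_wsteps _ _ inert_tick inert_zero _ _ Hl Pr0 IS a b eq_refl Hp)
    as (a'&b'&Pr'&C'&->&Hp'&Hw).
  unfold lsuccess in Hs; simpl in Hs. apply (Permutation_in _ Hp') in Hs.
  simpl in Hs. destruct Hs as [H|[H|[]]].
  - destruct a' as [|s a'']; [exists b', C'; auto|].
    rewrite prefix_cons in H; destruct s; discriminate.
  - destruct b' as [|s b'']; [discriminate|].
    rewrite prefix_cons in H; destruct s; discriminate.
Qed.


Lemma core (IS : cells) x y e f u j o :
  (forall i, IS i = Full) -> x = u ++ [P j] -> o <> j ->
  (exists b' C', wsteps (x,y,IS) ([],b',C')) ->
  NoStuck IS x y LTick LZero -> NoStuck IS x y LZero LTick ->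
  NoSucc IS x (y++e) LZero LTick -> NoStuck IS x (y++e) LTick LZero ->
  NoStuck IS (x++f) (y++e) LTick LZero ->
  (exists f1 f2 C, f = f1 ++ P o :: f2 /\ exec f1 IS = Some C /\ C o = Full) -> False.
Proof.
  intros HIS Hx Hoj (b'&C'&H0) Hs1 Hs2 Hn Hs3 Hs4 Hf.
  destruct (last_A _ _ H0 x y IS b' C' u j eq_refl eq_refl Hx) as (b0&C0&Hw0&HC0).
  pose proof (soloB_steps [P j] b0 C0) as Hw1.
  pose proof (solo_end b0 C0) as He1.
  destruct (solo b0 C0) as (rem1, C1) eqn:E1. simpl in Hw1, He1.
  assert (Hw01 := wsteps_trans _ _ _ Hw0 Hw1).
  destruct He1 as [->|(k&r1&->&Hk)].
  - assert (Hw2 := wsteps_appB _ _ _ _ _ _ e Hw01). simpl in Hw2.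
    pose proof (soloB_steps [P j] e C1) as Hw3.
    pose proof (solo_end e C1) as He2.
    destruct (solo e C1) as (rem2, C2) eqn:E2. simpl in Hw3, He2.
    assert (Hw23 := wsteps_trans _ _ _ Hw2 Hw3).
    destruct He2 as [->|(k&r2&->&Hk)].
    + apply (Hn _ _ _ Hw23). right; auto.
    + destruct (C2 j) eqn:Hj.
      * assert (Hkj : k <> j) by (intros ->; congruence).
        assert (Hw4 : wsteps (x, y ++ e, IS) ([], P k :: r2, upd C2 j Full)).
        { eapply wsteps_trans; [exact Hw23|]. apply wsteps_one. constructor; auto. }
        apply (wsteps_appA _ _ _ _ _ _ f) in Hw4. simpl in Hw4.
        assert (HD : upd C2 j Full = IS).
        { apply functional_extensionality. intros i.
          destruct (lock_two j k i Hkj) as [->| ->].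
          - rewrite upd_same, HIS; auto.
          - rewrite upd_other by auto. rewrite HIS; auto. }
        rewrite HD in Hw4.
        destruct Hf as (f1&f2&Cf&->&Hex&Hco).
        assert (Hok : o = k) by (destruct (lock_two j k o Hkj); congruence).
        subst o.
        pose proof (exec_steps _ _ _ (P k :: f2) (P k :: r2) Hex) as Hw5.
        apply (Hs4 _ _ _ (wsteps_trans _ _ _ Hw4 Hw5)).
        -- right. exists k, f2. auto.
        -- right. exists k, r2. auto.
      * apply (Hs3 _ _ _ Hw23).
        -- right. exists j, []. auto.
        -- right. exists k, r2. auto.
  - destruct (C1 j) eqn:Hj.
    + assert (Hkj : k <> j) by (intros ->; congruence).
      assert (Hw4 : wsteps (x, y, IS) ([], P k :: r1, upd C1 j Full)).
      { eapply wsteps_trans; [exact Hw01|]. apply wsteps_one. constructor; auto. }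
      apply (Hs2 _ _ _ Hw4).
      * left; auto.
      * right. exists k, r1. split; auto. rewrite upd_other by auto. auto.
    + apply (Hs1 _ _ _ Hw01).
      * right. exists j, []. auto.
      * right. exists k, r1. auto.
Qed.


Definition next2 (a b : ssub) : option (ssub * ssub) :=
  match a, b with
  | SSnd u1, SRcv u2 => Some (u1, u2)
  | SRcv u2, SSnd u1 => Some (u1, u2)
  | _, _ => None
  end.

Lemma sstep_two a b P' : sstep [a; b] P' ->
  exists u1 u2, next2 a b = Some (u1,u2) /\ P' = [u1; u2].
Proof.
  intros (U1&U2&R&Hp&->). pose proof (Permutation_length Hp) as HL. simpl in HL.
  destruct R; simpl in HL; try lia.
  apply Permutation_sym, Permutation_length_2_inv in Hp.
  destruct Hp as [H|H]; inversion H; subst; simpl; eauto.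
Qed.

Lemma sstep_two' a b u1 u2 : next2 a b = Some (u1,u2) -> sstep [a;b] [u1;u2].
Proof.
  destruct a, b; simpl; intros H; try discriminate; inversion H; subst.
  - exists u1, u2, []. split; auto.
  - exists u1, u2, []. split; auto. apply perm_swap.
Qed.

Lemma ssteps_two_inv a b P' : ssteps [a;b] P' ->
  P' = [a;b] \/ exists u1 u2, next2 a b = Some (u1,u2) /\ ssteps [u1;u2] P'.
Proof.
  intros H. inversion H; subst; auto.
  destruct (sstep_two _ _ _ H0) as (u1&u2&Hn&->). right; eauto.
Qed.

Ltac peel H := let x1 := fresh "x" in let x2 := fresh "x" in let Hn := fresh "Hn" in
  apply ssteps_two_inv in H; destruct H as [H|(x1&x2&Hn&H)];
  [subst | simpl in Hn; first [discriminate | injection Hn as <- <-; peel H]].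

Lemma may_here Pr : In STick Pr -> smay Pr.
Proof. intros; exists Pr; split; auto; constructor. Qed.
Lemma may_step a b u1 u2 : next2 a b = Some (u1,u2) -> smay [u1;u2] -> smay [a;b].
Proof.
  intros Hn (P'&Hs&Hi). exists P'. split; auto. econstructor; [apply sstep_two'; eauto|]; auto.
Qed.

Ltac solve_may := first [apply may_here; simpl; tauto | eapply may_step; [reflexivity | solve_may]].
Ltac solve_must := let P' := fresh in let H := fresh in intros P' H; peel H; solve_may.
Ltac solve_notmay := let P' := fresh in let H := fresh in let Hi := fresh in
  intros (P'&H&Hi); peel H; unfold ssuccess in Hi; simpl in Hi; intuition discriminate.

Definition tk := STick. Definition zr := SZero.

Lemma m1 : smay [SSnd STick; SRcv SZero]. Proof. solve_may. Qed.
Lemma m2 : smay [SSnd SZero; SRcv STick]. Proof. solve_may. Qed.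
Lemma u1 : smust [SSnd STick; SRcv SZero]. Proof. solve_must. Qed.
Lemma u2 : smust [SSnd SZero; SRcv STick]. Proof. solve_must. Qed.
Lemma u3 : smust [SSnd STick; SRcv (SSnd SZero)]. Proof. solve_must. Qed.
Lemma u4 : smust [SSnd (SRcv STick); SRcv (SSnd SZero)]. Proof. solve_must. Qed.
Lemma u5 : smust [SSnd STick; SRcv (SRcv SZero)]. Proof. solve_must. Qed.
Lemma u6 : smust [SSnd (SSnd STick); SRcv (SRcv SZero)]. Proof. solve_must. Qed.
Lemma u7 : smust [SSnd (SRcv SZero); SRcv STick]. Proof. solve_must. Qed.
Lemma u8 : smust [SSnd (SRcv SZero); SRcv (SSnd STick)]. Proof. solve_must. Qed.
Lemma u9 : smust [SSnd (SSnd SZero); SRcv STick]. Proof. solve_must. Qed.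
Lemma u10 : smust [SSnd (SSnd SZero); SRcv (SRcv STick)]. Proof. solve_must. Qed.
Lemma n1 : ~ smay [SSnd SZero; SRcv (SSnd STick)]. Proof. solve_notmay. Qed.
Lemma n2 : ~ smay [SSnd SZero; SRcv (SRcv STick)]. Proof. solve_notmay. Qed.
Lemma n3 : ~ smay [SSnd (SRcv STick); SRcv SZero]. Proof. solve_notmay. Qed.
Lemma n4 : ~ smay [SSnd (SSnd STick); SRcv SZero]. Proof. solve_notmay. Qed.


Lemma tr2 ws wr a b : tr_proc ws wr [a;b] = [tr_sub ws wr a; tr_sub ws wr b].
Proof. reflexivity. Qed.
Lemma trS ws wr U : tr_sub ws wr (SSnd U) = prefix ws (tr_sub ws wr U). Proof. reflexivity. Qed.
Lemma trR ws wr U : tr_sub ws wr (SRcv U) = prefix wr (tr_sub ws wr U). Proof. reflexivity. Qed.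
Lemma trT ws wr : tr_sub ws wr STick = LTick. Proof. reflexivity. Qed.
Lemma trZ ws wr : tr_sub ws wr SZero = LZero. Proof. reflexivity. Qed.

Ltac perm_tac := rewrite ?tr2, ?trS, ?trR, ?trT, ?trZ, ?prefix_app;
  first [apply Permutation_refl | apply perm_swap].

Lemma ends (w : list lsym) : w <> [] -> has_T_suffix w \/ exists u j, w = u ++ [P j].
Proof.
  intros H. destruct (exists_last H) as (u&s&->). destruct s as [i|i].
  - right; eauto.
  - left. exists u, [T i]. split; auto. split; [discriminate|]. constructor; [exact I|constructor].
Qed.

Lemma IS_full IS ws wr : blocking_type_P IS ws L1 -> blocking_type_P IS wr L2 ->
  forall i, IS i = Full.
Proof.
  intros (w1&w2&C&_&Hex&HC&Hf) (v1&v2&D&_&Hex'&HD&Hf').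
  pose proof (exec_preserve _ _ _ _ Hf Hex). pose proof (exec_preserve _ _ _ _ Hf' Hex').
  intros [|]; congruence.
Qed.

Lemma bt_nonempty IS w i : blocking_type_P IS w i -> w <> [].
Proof. intros (w1&w2&C&->&_). destruct w1; discriminate. Qed.

Lemma bt_weak IS w i : blocking_type_P IS w i ->
  exists f1 f2 C, w = f1 ++ P i :: f2 /\ exec f1 IS = Some C /\ C i = Full.
Proof. intros (w1&w2&C&H1&H2&H3&_). exists w1, w2, C. auto. Qed.

Theorem corollary5p14 (IS : cells) (ws wr : list lsym) :
  correct_translation IS ws wr ->
  blocking_type_P IS ws L1 ->
  blocking_type_P IS wr L2 ->
  has_T_suffix ws /\ has_T_suffix wr.
Proof.
  intros Hc Hb1 Hb2.
  pose proof (IS_full _ _ _ Hb1 Hb2) as HIS.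
  assert (GM : forall Pr, smust Pr -> lmust (tr_proc ws wr Pr, IS)) by (intros Pr H; exact (proj1 (proj2 (Hc Pr)) H)).
  assert (GY : forall Pr, smay Pr -> lmay (tr_proc ws wr Pr, IS)) by (intros Pr H; exact (proj1 (proj1 (Hc Pr)) H)).
  assert (GN : forall Pr, ~ smay Pr -> ~ lmay (tr_proc ws wr Pr, IS))
    by (intros Pr H H'; apply H; exact (proj2 (proj1 (Hc Pr)) H')).
  split.
  - destruct (ends ws (bt_nonempty _ _ _ Hb1)) as [H|(u&j&Hu)]; auto. exfalso.
    destruct j.
    + apply (core IS ws wr ws wr u L1 L2 HIS Hu ltac:(discriminate)).
      * apply (may_extract IS _ _ _ (GY _ m1)). perm_tac.
      * apply (nostuck_of IS _ _ _ _ _ (GM _ u1)). perm_tac.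
      * apply (nostuck_of IS _ _ _ _ _ (GM _ u2)). perm_tac.
      * apply (nosucc_of IS _ _ _ _ _ (GN _ n1)). perm_tac.
      * apply (nostuck_of IS _ _ _ _ _ (GM _ u3)). perm_tac.
      * apply (nostuck_of IS _ _ _ _ _ (GM _ u4)). perm_tac.
      * apply bt_weak; auto.
    + apply (core IS ws wr wr ws u L2 L1 HIS Hu ltac:(discriminate)).
      * apply (may_extract IS _ _ _ (GY _ m1)). perm_tac.
      * apply (nostuck_of IS _ _ _ _ _ (GM _ u1)). perm_tac.
      * apply (nostuck_of IS _ _ _ _ _ (GM _ u2)). perm_tac.
      * apply (nosucc_of IS _ _ _ _ _ (GN _ n2)). perm_tac.
      * apply (nostuck_of IS _ _ _ _ _ (GM _ u5)). perm_tac.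
      * apply (nostuck_of IS _ _ _ _ _ (GM _ u6)). perm_tac.
      * apply bt_weak; auto.
  - destruct (ends wr (bt_nonempty _ _ _ Hb2)) as [H|(u&j&Hu)]; auto. exfalso.
    destruct j.
    + apply (core IS wr ws ws wr u L1 L2 HIS Hu ltac:(discriminate)).
      * apply (may_extract IS _ _ _ (GY _ m2)). perm_tac.
      * apply (nostuck_of IS _ _ _ _ _ (GM _ u2)). perm_tac.
      * apply (nostuck_of IS _ _ _ _ _ (GM _ u1)). perm_tac.
      * apply (nosucc_of IS _ _ _ _ _ (GN _ n4)). perm_tac.
      * apply (nostuck_of IS _ _ _ _ _ (GM _ u9)). perm_tac.
      * apply (nostuck_of IS _ _ _ _ _ (GM _ u10)). perm_tac.
      * apply bt_weak; auto.
    + apply (core IS wr ws wr ws u L2 L1 HIS Hu ltac:(discriminate)).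
      * apply (may_extract IS _ _ _ (GY _ m2)). perm_tac.
      * apply (nostuck_of IS _ _ _ _ _ (GM _ u2)). perm_tac.
      * apply (nostuck_of IS _ _ _ _ _ (GM _ u1)). perm_tac.
      * apply (nosucc_of IS _ _ _ _ _ (GN _ n3)). perm_tac.
      * apply (nostuck_of IS _ _ _ _ _ (GM _ u7)). perm_tac.
      * apply (nostuck_of IS _ _ _ _ _ (GM _ u8)). perm_tac.
      * apply bt_weak; auto.
Qed.
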